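(* Let $\nabla:\Omega(A)\to\Omega(A)\otimes_A\Omega(A)$ be a module connection with associated affine connection $(\mathsf K_\nabla,\mathsf H_\nabla)$ and torsion $\mathsf V$. Then $\mathsf V(a)=a$ and $\mathsf V(\mathsf d(a))=\widehat\psi(\widehat\nabla(\mathsf d(a)))$ for all $a\in A$. In particular, if $\widehat\nabla(\mathsf d(a))=0$ for all $a\in A$, then $(\mathsf K_\nabla,\mathsf H_\nabla)$ is torsion-free.
   Context: Fix a commutative ring $R$ and a commutative $R$-algebra $A$; $\Omega(A)$ is the Kähler module of $A$ over $R$ with universal derivation $\mathsf d$, and $\Omega^2(A)=\Omega(A)\wedge_A\Omega(A)$. A module connection on $\Omega(A)$ is an $R$-linear $\nabla:\Omega(A)\to\Omega(A)\otimes_A\Omega(A)$ with $\nabla(a\alpha)=a\nabla(\alpha)+\mathsf d(a)\otimes\alpha$. $\mathsf T(A)=\mathrm{Sym}_A(\Omega(A))$ (which equals the symmetric algebra $\mathsf S_A(\Omega(A))$), $\mathsf T^2(A)=\mathsf T(\mathsf T(A))$ with universal derivation $\mathsf d':\mathsf T(A)\to\mathsf T^2(A)$, generated over $A$ by $\mathsf d(a),\mathsf d'(a),\mathsf d'\mathsf d(a)$; $\mathsf c_A:\mathsf T^2(A)\to\mathsf T^2(A)$ is the algebra map $a\mapsto a$, $\mathsf d(a)\mapsto\mathsf d'(a)$, $\mathsf d'(a)\mapsto\mathsf d(a)$, $\mathsf d'\mathsf d(a)\mapsto\mathsf d'\mathsf d(a)$. The associated affine connection (a tangent category connection on the tangent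 bundle of $A$ in affine schemes) has vertical part the algebra map $\mathsf K_\nabla:\mathsf T(A)\to\mathsf T^2(A)$, $a\mapsto a$, $\mathsf d(a)\mapsto\mathsf d'\mathsf d(a)-U'(\nabla(\mathsf d a))$, and horizontal part $\mathsf H_\nabla:\mathsf T^2(A)\to\mathsf T(A)\otimes_A\mathsf T(A)$ with $\mathsf H_\nabla(\mathsf d'\mathsf d(a))=\nabla(\mathsf d(a))$, where $U':\mathsf T(A)\otimes_A\mathsf T(A)\to\mathsf T^2(A)$ is the algebra map $w\otimes v\mapsto\mathsf T(\mathsf p_A)(w)\,v$ with $\mathsf T(\mathsf p_A)(a)=a$, $\mathsf T(\mathsf p_A)(\mathsf d a)=\mathsf d'(a)$ (so $\mathsf d(b)\otimes\mathsf d(c)\mapsto\mathsf d'(b)\mathsf d(c)$). The torsion of this affine connection (computed from the horizontal connection) is the algebra map $\mathsf V:\mathsf T(A)\to\mathsf T^2(A)$ with $\mathsf V(a)=a$ and $\mathsf V(\mathsf d(a))=\mathsf c_A\big(U'(\mathsf H_\nabla(\mathsf d'\mathsf d a))\big)-U'\big(\mathsf H_\nabla(\mathsf c_A(\mathsf d'\mathsf d a))\big)$; the connection is torsion-free if $\mathsf V(\mathsf d(a))=0$ for all $a\in A$. The torsion of $\nabla$ is $\widehat\nabla=\omega\circ\nabla:\Omega(A)\to\Omega^2(A)$ with $\omega(\alpha\otimes\beta)=\alpha\wedge\beta$. The map $\widehat\psi:\Omega^2(A)\to\mathsf T^2(A)$ is $a\,\mathsf d(b)\wedge\mathsf d(c)\mapsto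 a\,\mathsf d(b)\mathsf d'(c)-a\,\mathsf d'(b)\mathsf d(c)$, extended additively. *)

(* Defs.v *)
(* Kähler modules, tensor products, exterior squares,
   symmetric algebras and tensor products of algebras are not in MathComp;
   they are given here by their universal properties. *)
From mathcomp Require Import all_boot all_algebra.
Set Implicit Arguments.
Unset Strict Implicit.
Unset Printing Implicit Defensive.
Import GRing.Theory.
Local Open Scope ring_scope.

Definition additive_fun (U V : zmodType) (f : U -> V) : Prop :=
  forall x y, f (x + y) = f x + f y.

Definition Alinear (A : pzRingType) (U V : lmodType A) (f : U -> V) : Prop :=
  additive_fun f /\ forall (a : A) x, f (a *: x) = a *: f x.

Definition ring_mor (S T : pzRingType) (f : S -> T) : Prop :=
  [/\ additive_fun f, (forall x y, f (x * y) = f x * f y) & f 1 = 1].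

Definition alg_mor (A : pzRingType) (S T : comAlgType A) (f : S -> T) : Prop :=
  ring_mor f /\ forall (a : A) x, f (a *: x) = a *: f x.

(* R-linear derivations S -> M, where R acts on S (and M) through sc : R -> S *)
Definition R_derivation (R : Type) (S : comPzRingType) (sc : R -> S)
    (M : lmodType S) (D : S -> M) : Prop :=
  [/\ additive_fun D, (forall r s, D (sc r * s) = sc r *: D s)
    & forall s t, D (s * t) = s *: D t + t *: D s].

Definition is_Kahler (R : Type) (S : comPzRingType) (sc : R -> S)
    (Om : lmodType S) (d : S -> Om) : Prop :=
  R_derivation sc d /\
  forall (M : lmodType S) (D : S -> M), R_derivation sc D ->
    exists f : Om -> M,
      [/\ Alinear f, (forall s, f (d s) = D s)
        & forall g : Om -> M, Alinear g -> (forall s, g (d s) = D s) ->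
            forall x, g x = f x].

Definition bilinear_map (A : pzRingType) (U V W : lmodType A)
    (b : U -> V -> W) : Prop :=
  (forall v, Alinear (fun u => b u v)) /\ (forall u, Alinear (b u)).

Definition is_tensor (A : pzRingType) (U V T : lmodType A)
    (t : U -> V -> T) : Prop :=
  bilinear_map t /\
  forall (M : lmodType A) (b : U -> V -> M), bilinear_map b ->
    exists f : T -> M,
      [/\ Alinear f, (forall u v, f (t u v) = b u v)
        & forall g : T -> M, Alinear g -> (forall u v, g (t u v) = b u v) ->
            forall x, g x = f x].

Definition is_wedge (A : pzRingType) (U W : lmodType A)
    (w : U -> U -> W) : Prop :=
  [/\ bilinear_map w, (forall u, w u u = 0) &
  forall (M : lmodType A) (b : U -> U -> M), bilinear_map b ->
    (forall u, b u u = 0) ->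
    exists f : W -> M,
      [/\ Alinear f, (forall u v, f (w u v) = b u v)
        & forall g : W -> M, Alinear g -> (forall u v, g (w u v) = b u v) ->
            forall x, g x = f x]].

Definition is_symalg (A : comNzRingType) (M : lmodType A) (S : comAlgType A)
    (j : M -> S) : Prop :=
  Alinear j /\
  forall (B : comAlgType A) (f : M -> B), Alinear f ->
    exists g : S -> B,
      [/\ alg_mor g, (forall m, g (j m) = f m)
        & forall h : S -> B, alg_mor h -> (forall m, h (j m) = f m) ->
            forall x, h x = g x].

(* (P, i1, i2) is the tensor product S1 (x)_A S2 of commutative A-algebras,
   with i1 w * i2 v playing the role of w (x) v *)
Definition is_alg_tensor (A : comNzRingType) (S1 S2 P : comAlgType A)
    (i1 : S1 -> P) (i2 : S2 -> P) : Prop :=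
  [/\ alg_mor i1, alg_mor i2 &
  forall (B : comAlgType A) (g1 : S1 -> B) (g2 : S2 -> B),
    alg_mor g1 -> alg_mor g2 ->
    exists h : P -> B,
      [/\ alg_mor h, (forall x, h (i1 x) = g1 x), (forall y, h (i2 y) = g2 y)
        & forall k : P -> B, alg_mor k -> (forall x, k (i1 x) = g1 x) ->
            (forall y, k (i2 y) = g2 y) -> forall z, k z = h z]].

Definition module_connection (R : Type) (A : comNzRingType) (sc : R -> A)
    (Om OO : lmodType A) (d : A -> Om) (tens : Om -> Om -> OO)
    (nab : Om -> OO) : Prop :=
  [/\ additive_fun nab, (forall r x, nab (sc r *: x) = sc r *: nab x)
    & forall (a : A) x, nab (a *: x) = a *: nab x + tens (d a) x].

(* Main.v *)
From HB Require Import structures.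
Require Import Defs.
From mathcomp Require Import all_boot all_algebra.
From Stdlib Require Import ClassicalEpsilon FunctionalExtensionality PropExtensionality.
Import GRing.Theory.
Local Open Scope ring_scope.

Section Quot.
Variables (A : pzRingType) (Om : lmodType A) (S : Om -> Prop).
Hypotheses (S0 : S 0) (SD : forall x y, S x -> S y -> S (x + y))
  (SZ : forall a x, S x -> S (a *: x)).

Lemma SN x : S x -> S (- x).
Proof. by move=> Sx; rewrite -scaleN1r; apply: SZ. Qed.
Lemma SB x y : S x -> S y -> S (x - y).
Proof. by move=> Sx Sy; apply: SD => //; apply: SN. Qed.

Definition rr (x : Om) : Om := epsilon (inhabits 0) (fun y => S (y - x)).
Lemma rr_spec x : S (rr x - x).
Proof. apply: (epsilon_spec (inhabits 0) (fun y => S (y - x))). by exists x; rewrite subrr. Qed.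
Lemma rr_eq x y : S (x - y) -> rr x = rr y.
Proof.
move=> Sxy; rewrite /rr; f_equal; apply: functional_extensionality => z.
apply: propositional_extensionality; split => H.
- have -> : z - y = (z - x) + (x - y) by rewrite subrKA.
  idtac.
  by apply: SD.
- have -> : z - x = (z - y) - (x - y) by rewrite opprB subrKA.
  by apply: SB.
Qed.
Lemma rr_eqS x y : rr x = rr y -> S (x - y).
Proof.
move=> E.
have -> : x - y = (rr y - y) - (rr x - x).
  by rewrite E opprB (addrC (rr y - y)) subrKA.
by apply: SB; apply: rr_spec.
Qed.
Lemma rrK x : rr (rr x) = rr x.
Proof. by apply: rr_eq; apply: rr_spec. Qed.

Definition Q := {x : Om | rr x == x}.
HB.instance Definition _ := Choice.on Q.

Definition pq (x : Om) : Q := exist _ (rr x) (introT eqP (rrK x)).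
Lemma pqK (q : Q) : pq (val q) = q.
Proof. by apply: val_inj => /=; apply/eqP; apply: (valP q). Qed.
Lemma pq_eq x y : pq x = pq y <-> S (x - y).
Proof.
split => [E | H]; first by apply: rr_eqS; move: E => /(congr1 val).
by apply: val_inj => /=; apply: rr_eq.
Qed.
Lemma Sval x : S (val (pq x) - x).
Proof. exact: rr_spec. Qed.

Definition zeroQ : Q := pq 0.
Definition addQ (u v : Q) : Q := pq (val u + val v).
Definition oppQ (u : Q) : Q := pq (- val u).
Definition scaleQ (a : A) (u : Q) : Q := pq (a *: val u).

Lemma pqD x y : pq (x + y) = addQ (pq x) (pq y).
Proof.
rewrite /addQ; apply/pq_eq.
have -> : x + y - (val (pq x) + val (pq y)) = - ((val (pq x) - x) + (val (pq y) - y)).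
  by rewrite opprD addrACA opprD !opprB.
by apply: SN; apply: SD; apply: Sval.
Qed.
Lemma pqN x : pq (- x) = oppQ (pq x).
Proof.
rewrite /oppQ; apply/pq_eq.
have -> : - x - - val (pq x) = (val (pq x) - x) by rewrite opprK addrC.
exact: Sval.
Qed.
Lemma pqZ a x : pq (a *: x) = scaleQ a (pq x).
Proof.
rewrite /scaleQ; apply/pq_eq.
have -> : a *: x - a *: val (pq x) = - (a *: (val (pq x) - x)).
  by rewrite scalerBr opprB.
by apply: SN; apply: SZ; apply: Sval.
Qed.

Lemma addQA : associative addQ.
Proof. by move=> u v w; rewrite -[u]pqK -[v]pqK -[w]pqK -!pqD addrA. Qed.
Lemma addQC : commutative addQ.
Proof. by move=> u v; rewrite -[u]pqK -[v]pqK -!pqD addrC. Qed.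
Lemma add0Q : left_id zeroQ addQ.
Proof. by move=> u; rewrite -[u]pqK /zeroQ -!pqD add0r. Qed.
Lemma addNQ : left_inverse zeroQ oppQ addQ.
Proof. by move=> u; rewrite -[u]pqK -pqN -pqD addNr. Qed.
HB.instance Definition _ := GRing.isZmodule.Build Q addQA addQC add0Q addNQ.

Lemma scaleQA a b v : scaleQ a (scaleQ b v) = scaleQ (a * b) v.
Proof. by rewrite -[v]pqK -!pqZ scalerA. Qed.
Lemma scale1Q : left_id 1 scaleQ.
Proof. by move=> v; rewrite -[v]pqK -!pqZ scale1r. Qed.
Lemma scaleQDr : right_distributive scaleQ (@GRing.add Q).
Proof. move=> a u v; change (scaleQ a (addQ u v) = addQ (scaleQ a u) (scaleQ a v)).
by rewrite -[u]pqK -[v]pqK -pqD -!pqZ -pqD scalerDr. Qed.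
Lemma scaleQDl v : {morph scaleQ^~ v: a b / a + b}.
Proof. move=> a b; change (scaleQ (a + b) v = addQ (scaleQ a v) (scaleQ b v)).
by rewrite -[v]pqK -!pqZ -pqD scalerDl. Qed.
HB.instance Definition _ := GRing.Zmodule_isLmodule.Build A Q scaleQA scale1Q scaleQDr scaleQDl.

Lemma quot_exists : exists (M : lmodType A) (p : Om -> M),
  Alinear p /\ forall x, p x = 0 <-> S x.
Proof.
exists Q, pq; split; first split.
- by move=> x y; rewrite pqD.
- by move=> a x; rewrite pqZ.
- move=> x; have -> : (0 : Q) = pq 0 by [].
  by rewrite pq_eq subr0.
Qed.
End Quot.

Lemma additive0 {U V : zmodType} {f : U -> V} : additive_fun f -> f 0 = 0.
Proof.
move=> Hf; have h := Hf 0 0; rewrite addr0 in h.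
by move: h; rewrite -{1}[f 0]addr0 => /addrI.
Qed.

Inductive spanD {B : pzRingType} {M : lmodType B} (d : B -> M) : M -> Prop :=
| sD0 : spanD d 0
| sDD x y : spanD d x -> spanD d y -> spanD d (x + y)
| sDg a b : spanD d (a *: d b).

Lemma spanDZ (B : pzRingType) (M : lmodType B) (d : B -> M) a x :
  spanD d x -> spanD d (a *: x).
Proof.
elim=> [|x1 x2 _ IH1 _ IH2|a' b].
- by rewrite scaler0; apply: sD0.
- by rewrite scalerDr; apply: sDD.
- by rewrite scalerA; apply: sDg.
Qed.

Lemma kahler_span (R : Type) (S : comPzRingType) (sc : R -> S)
  (Om : lmodType S) (d : S -> Om) : is_Kahler sc d -> forall x, spanD d x.
Proof.
move=> [_ HU] x.
have [M [p [Hp Hker]]] := @quot_exists _ _ _ (@sD0 _ _ d) (@sDD _ _ d) (@spanDZ _ _ d).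
have Hder : R_derivation sc (fun _ : S => (0 : M)).
  by split=> [u v|r s|s t]; rewrite ?addr0 ?scaler0 ?addr0.
have [f [_ _ Hu]] := HU M _ Hder.
have e1 : p x = f x.
  apply: Hu => // s; apply/Hker.
  by rewrite -[d s]scale1r; apply: sDg.
have e2 : (fun _ : Om => (0 : M)) x = f x.
  apply: Hu => //; split=> [u v|a u]; by rewrite ?addr0 ?scaler0.
by apply/Hker; rewrite e1 -e2.
Qed.

Inductive spanT {B : pzRingType} {M N : lmodType B} (d : B -> M)
   (t : M -> M -> N) : N -> Prop :=
| sT0 : spanT d t 0
| sTD x y : spanT d t x -> spanT d t y -> spanT d t (x + y)
| sTg a b c : spanT d t (a *: t (d b) (d c)).

Lemma spanTZ (B : pzRingType) (M N : lmodType B) (d : B -> M) (t : M -> M -> N) a x :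
  spanT d t x -> spanT d t (a *: x).
Proof.
elim=> [|x1 x2 _ IH1 _ IH2|a' b c].
- by rewrite scaler0; apply: sT0.
- by rewrite scalerDr; apply: sTD.
- by rewrite scalerA; apply: sTg.
Qed.

Lemma tensor_span (B : pzRingType) (M N : lmodType B) (d : B -> M)
   (t : M -> M -> N) : is_tensor t -> (forall x, spanD d x) ->
   forall z, spanT d t z.
Proof.
move=> [[Hl Hr] HU] Hsp z.
have [Q [p [Hp Hker]]] := @quot_exists _ _ _ (@sT0 _ _ _ d t) (@sTD _ _ _ d t) (@spanTZ _ _ _ d t).
have Hall : forall u v, spanT d t (t u v).
  move=> u v; elim: (Hsp u) => [|u1 u2 _ IH1 _ IH2|a b].
  - by rewrite (additive0 (Hl v).1); apply: sT0.
  - by rewrite (Hl v).1; apply: sTD.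
  - rewrite (Hl v).2; apply: spanTZ.
    elim: (Hsp v) => [|v1 v2 _ IH1 _ IH2|a' c].
    + by rewrite (additive0 (Hr _).1); apply: sT0.
    + by rewrite (Hr _).1; apply: sTD.
    + by rewrite (Hr _).2; apply: sTg.
have Hb : bilinear_map (fun (_ _ : M) => (0 : Q)).
  by split=> w; split=> [u v|a u]; rewrite ?addr0 ?scaler0.
have [f [_ _ Hu]] := HU Q _ Hb.
have e1 : p z = f z by apply: Hu => // u v; apply/Hker; apply: Hall.
have e2 : (fun _ : N => (0 : Q)) z = f z.
  apply: Hu => //; split=> [u v|a u]; by rewrite ?addr0 ?scaler0.
by apply/Hker; rewrite e1 -e2.
Qed.
Theorem mainTheorem13
  (R : comPzRingType) (A : comAlgType R)
  (* Omega(A), d *)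
  (Om : lmodType A) (d : A -> Om)
  (HOm : is_Kahler (fun r : R => r%:A : A) d)
  (* Omega(A) (x)_A Omega(A) *)
  (OO : lmodType A) (tens : Om -> Om -> OO) (HOO : is_tensor tens)
  (* Omega^2(A) = Omega(A) /\_A Omega(A) *)
  (O2 : lmodType A) (wedge : Om -> Om -> O2) (HO2 : is_wedge wedge)
  (* omega(alpha (x) beta) = alpha /\ beta *)
  (omega : OO -> O2)
  (Homega : Alinear omega /\ forall x y, omega (tens x y) = wedge x y)
  (* T(A) = Sym_A(Omega(A)) *)
  (TA : comAlgType A) (j : Om -> TA) (HTA : is_symalg j)
  (* Omega(T(A)) over R, with universal derivation d' *)
  (Om1 : lmodType TA) (d1 : TA -> Om1)
  (HOm1 : is_Kahler (fun r : R => (r%:A : A)%:A : TA) d1)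
  (* T^2(A) = Sym_{T(A)}(Omega(T(A))) *)
  (TT : comAlgType TA) (j2 : Om1 -> TT) (HTT : is_symalg j2)
  (* the flip c_A *)
  (c : TT -> TT)
  (Hc : [/\ ring_mor c,
          forall a : A, c ((a%:A : TA)%:A) = (a%:A : TA)%:A,
          forall a : A, c ((j (d a))%:A) = j2 (d1 (a%:A)),
          forall a : A, c (j2 (d1 (a%:A))) = (j (d a))%:A
        & forall a : A, c (j2 (d1 (j (d a)))) = j2 (d1 (j (d a)))])
  (* T(p_A) : T(A) -> T^2(A) *)
  (Tp : TA -> TT)
  (HTp : [/\ ring_mor Tp, forall a : A, Tp (a%:A) = (a%:A : TA)%:A
          & forall a : A, Tp (j (d a)) = j2 (d1 (a%:A))])
  (* T(A) (x)_A T(A) *)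
  (TTA : comAlgType A) (in1 in2 : TA -> TTA) (HTTA : is_alg_tensor in1 in2)
  (* U' : T(A) (x)_A T(A) -> T^2(A),  w (x) v |-> T(p_A)(w) v *)
  (U' : TTA -> TT)
  (HU : ring_mor U' /\ forall w v : TA, U' (in1 w * in2 v) = Tp w * v%:A)
  (* the inclusion Omega(A) (x)_A Omega(A) -> T(A) (x)_A T(A) *)
  (iota : OO -> TTA)
  (Hiota : Alinear iota /\
           forall x y, iota (tens x y) = in1 (j x) * in2 (j y))
  (* the module connection *)
  (nab : Om -> OO)
  (Hnab : module_connection (fun r : R => r%:A : A) d tens nab)
  (* vertical part K_nabla *)
  (K : TA -> TT)
  (HK : [/\ ring_mor K, forall a : A, K (a%:A) = (a%:A : TA)%:A
         & forall a : A, K (j (d a)) = j2 (d1 (j (d a))) - U' (iota (nab (d a)))])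
  (* horizontal part H_nabla *)
  (H : TT -> TTA)
  (HH : forall a : A, H (j2 (d1 (j (d a)))) = iota (nab (d a)))
  (* psi-hat : Omega^2(A) -> T^2(A) *)
  (psi : O2 -> TT)
  (Hpsi : additive_fun psi /\
          forall a b c0 : A, psi (a *: wedge (d b) (d c0)) =
            (a%:A : TA)%:A * (j (d b))%:A * j2 (d1 (c0%:A))
            - (a%:A : TA)%:A * j2 (d1 (b%:A)) * (j (d c0))%:A)
  (* the torsion V *)
  (V : TA -> TT)
  (HV : [/\ ring_mor V, forall a : A, V (a%:A) = (a%:A : TA)%:A
         & forall a : A, V (j (d a)) =
             c (U' (H (j2 (d1 (j (d a))))))
             - U' (H (c (j2 (d1 (j (d a))))))]) :
  [/\ forall a : A, V (a%:A) = (a%:A : TA)%:A,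
      forall a : A, V (j (d a)) = psi (omega (nab (d a)))
    & (forall a : A, omega (nab (d a)) = 0) -> forall a : A, V (j (d a)) = 0].
Proof.
have [HVr HVa HVd] := HV.
have [[cD cM c1] cA cjd cdj cdd] := Hc.
have [[TpD TpM Tp1] TpA Tpd] := HTp.
have [[UD UM U1] Uin] := HU.
have [[ioD ioZ] iot] := Hiota.
have [[omD omZ] omt] := Homega.
have [psD psg] := Hpsi.
have [[i1D i1M i11] i1Z] : alg_mor in1 by case: HTTA.
have [[i2D i2M i21] i2Z] : alg_mor in2 by case: HTTA.
have key : forall x, spanT d tens x ->
    c (U' (iota x)) - U' (iota x) = psi (omega x).
  move=> x0; elim=> [|x y _ IHx _ IHy|a b c0].
  - by rewrite !(additive0 ioD) !(additive0 UD) (additive0 cD)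
               (additive0 omD) (additive0 psD) subrr.
  - rewrite ioD UD cD omD psD -IHx -IHy.
    by rewrite opprD addrACA.
  - rewrite ioZ iot omZ omt psg.
    have e : a *: (in1 (j (d b)) * in2 (j (d c0))) =
             in1 (a%:A * j (d b)) * in2 (j (d c0)).
      by rewrite i1M -mulrA -[in1 (a%:A)]/(in1 (a *: 1)) i1Z i11 -scalerAl mul1r.
    rewrite e Uin TpM TpA Tpd !cM cA cjd cdj.
    done.
have Hsp := @tensor_span _ _ _ d tens HOO (@kahler_span _ _ _ _ d HOm).
split=> //.
- move=> a; rewrite HVd HH cdd HH; exact: key (Hsp _).
- move=> H0 a; by rewrite HVd HH cdd HH (key _ (Hsp _)) H0 (additive0 psD).
Qed.
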